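(* Let $A$ be a finite abelian group with $|A|=n$, and let $T$ be an $A$-cordial tree with $nk$ vertices for some $k\in\mathbb{N}$. If $T^*$ is a tree containing $T$ as an induced subgraph and $|V(T^* )|\le nk+\lfloor n/2\rfloor+1$, then $T^*$ is $A$-cordial.
   Context: $\mathbb{N}=\mathbb{Z}_{\ge0}$. Graphs are finite, simple and undirected. For an abelian group $A$ and a graph $G=(V,E)$, a vertex labeling $\ell:V\to A$ induces an edge labeling $\ell(\{v_1,v_2\})=\ell(v_1)+\ell(v_2)$. Let $f_V(a)=|\{v\in V:\ell(v)=a\}|$ and $f_E(a)=|\{e\in E:\ell(e)=a\}|$. The labeling is $A$-cordial if $|f_V(a_1)-f_V(a_2)|\le 1$ and $|f_E(a_1)-f_E(a_2)|\le 1$ for all $a_1,a_2\in A$; $G$ is $A$-cordial if it admits an $A$-cordial labeling. *)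

(* Defs.v *)
From mathcomp Require Import all_boot all_algebra.
Set Implicit Arguments. Unset Strict Implicit. Unset Printing Implicit Defensive.
Import GRing.Theory.
Local Open Scope ring_scope.

Section Graphs.
Variable V : finType.
Variable adj : rel V.

Definition simple_graph : Prop := symmetric adj /\ irreflexive adj.

Definition edges : {set {set V}} :=
  [set e : {set V} | [exists x, exists y, adj x y && (e == [set x; y])]].

Definition is_tree : Prop :=
  simple_graph /\ (0 < #|V|)%N /\ (forall x y : V, connect adj x y)
  /\ #|edges| = (#|V| - 1)%N.

Variable A : finZmodType.

Definition fV (l : V -> A) (a : A) : nat := #|[set v | l v == a]|.

Definition fE (l : V -> A) (a : A) : nat :=
  #|[set e in edges | [exists x, exists y,
        [&& adj x y, e == [set x; y] & l x + l y == a]]]|.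

Definition cordial_labeling (l : V -> A) : Prop :=
  forall a1 a2 : A,
    (fV l a1 <= (fV l a2).+1)%N /\ (fV l a2 <= (fV l a1).+1)%N /\
    (fE l a1 <= (fE l a2).+1)%N /\ (fE l a2 <= (fE l a1).+1)%N.

Definition A_cordial : Prop := exists l : V -> A, cordial_labeling l.

End Graphs.

Definition induced_subgraph (V W : finType) (adjV : rel V) (adjW : rel W) : Prop :=
  exists f : V -> W, injective f /\ forall x y, adjV x y = adjW (f x) (f y).

(* Main.v *)
Require Import Defs.
From mathcomp Require Import all_boot all_algebra.
From mathcomp Require Import zify.
Set Implicit Arguments. Unset Strict Implicit. Unset Printing Implicit Defensive.
Import GRing.Theory.

Definition lab (T : finType) (A : finZmodType) (L : T -> A) (e : {set T}) : A :=
  (\sum_(x in e) L x)%R.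

Lemma lab_pair (T : finType) (A : finZmodType) (L : T -> A) x y :
  x != y -> lab L [set x; y] = (L x + L y)%R.
Proof. by move=> xy; rewrite /lab big_setU1 /= ?big_set1 // inE. Qed.

Lemma fE_lab (T : finType) (adj : rel T) (A : finZmodType) (L : T -> A) a :
  simple_graph adj ->
  fE adj L a = #|[set e in edges adj | lab L e == a]|.
Proof.
move=> [sym irr]; rewrite /fE; have EE : forall e, e \in edges adj -> exists x y, adj x y /\ e = [set x; y].
  move=> e; rewrite /edges inE => /existsP[x0 /existsP[y0 /andP[a0 /eqP E0]]].
  by exists x0, y0.
move: EE; set E := edges adj; clearbody E => EE.
apply: eq_card => e; rewrite !inE.
case He: (e \in E) => //=.
have [x0 [y0 [a0 E0]]] := EE e He.
have nxy : forall x y, adj x y -> x != y.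
  by move=> x y axy; apply/eqP => exy; move: axy; rewrite exy irr.
apply/idP/idP.
- case/existsP=> x /existsP[y /and3P[axy /eqP -> /eqP <-]].
  by rewrite lab_pair ?nxy.
- move=> /eqP <-; apply/existsP; exists x0; apply/existsP; exists y0.
  by rewrite E0 lab_pair ?nxy // a0 !eqxx.
Qed.

Lemma sum_fib (T : finType) (B : finType) (E : {set T}) (g : T -> B) :
  \sum_(a : B) #|[set e in E | g e == a]| = #|E|.
Proof.
rewrite -sum1_card (partition_big g predT) //=.
apply: eq_bigr => a _; rewrite -sum1_card; apply: eq_bigl => e; by rewrite inE.
Qed.

Lemma sum_le_eq (I : finType) (h : I -> nat) c :
  (forall b, h b <= c) -> \sum_b h b = #|I| * c -> forall b, h b = c.
Proof.
move=> Hle Hs a.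
have Hr : \sum_(b | b != a) h b <= #|I|.-1 * c.
  apply: (@leq_trans (\sum_(b | b != a) c)); first by apply: leq_sum => b _.
  by rewrite (eq_bigl (mem (predC1 a))) // sum_nat_const cardC1.
rewrite (bigD1 a) //= in Hs.
have : 0 < #|I| by apply/card_gt0P; exists a.
case: #|I| Hs Hr => [|n] //= Hs Hr _.
rewrite mulSn in Hs. have := Hle a. lia.
Qed.

Lemma sum_ge_eq (I : finType) (h : I -> nat) c :
  (forall b, c <= h b) -> \sum_b h b = #|I| * c -> forall b, h b = c.
Proof.
move=> Hle Hs a.
have Hr : #|I|.-1 * c <= \sum_(b | b != a) h b.
  apply: (@leq_trans (\sum_(b | b != a) c)); last by apply: leq_sum => b _.
  by rewrite (eq_bigl (mem (predC1 a))) // sum_nat_const cardC1.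
rewrite (bigD1 a) //= in Hs.
have : 0 < #|I| by apply/card_gt0P; exists a.
case: #|I| Hs Hr => [|n] //= Hs Hr _.
rewrite mulSn in Hs. have := Hle a. lia.
Qed.

Lemma card_fib_le1 (T B : finType) (D : {set T}) (g : T -> B) b :
  {in D &, injective g} -> #|[set w in D | g w == b]| <= 1.
Proof.
move=> ginj.
have inj2 : {in [set w in D | g w == b] &, injective g}.
  by move=> w1 w2; rewrite !inE => /andP[w1D _] /andP[w2D _]; apply: ginj.
rewrite -(card_in_imset inj2) -(cards1 b); apply: subset_leq_card.
apply/subsetP => c /imsetP[w]; rewrite inE => /andP[_ /eqP <-] ->; by rewrite inE.
Qed.

Lemma count_split (T : finType) (B : eqType) (X Y : {set T}) (g : T -> B) a :
  X :&: Y = set0 ->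
  #|[set e in X :|: Y | g e == a]| = #|[set e in X | g e == a]| + #|[set e in Y | g e == a]|.
Proof.
move=> XY.
have -> : [set e in X :|: Y | g e == a] = [set e in X | g e == a] :|: [set e in Y | g e == a].
  by apply/setP => e; rewrite !inE andb_orl.
rewrite cardsU.
have -> : [set e in X | g e == a] :&: [set e in Y | g e == a] = set0.
  apply/setP => e; rewrite !inE; move/setP: XY => /(_ e); rewrite !inE.
  by case: (e \in X); case: (e \in Y); case: (g e == a).
by rewrite cards0 subn0.
Qed.

Lemma img_count (T1 T2 : finType) (B : eqType) (h : T1 -> T2) (D : {set T1})
  (g1 : T1 -> B) (g2 : T2 -> B) a :
  injective h -> (forall d, g2 (h d) = g1 d) ->
  #|[set e in h @: D | g2 e == a]| = #|[set d in D | g1 d == a]|.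
Proof.
move=> hinj hg; rewrite -(card_imset _ hinj); apply: eq_card => e.
rewrite !inE; apply/andP/imsetP.
- case=> /imsetP[d dD ->]; rewrite hg => gd; exists d => //; by rewrite inE dD.
- case=> d; rewrite inE => /andP[dD gd] ->; split; first exact: imset_f.
  by rewrite hg.
Qed.

Lemma union_eq (T : finType) (X Y Z : {set T}) :
  X \subset Z -> Y \subset Z -> X :&: Y = set0 -> #|Z| <= #|X| + #|Y| -> X :|: Y = Z.
Proof.
move=> XZ YZ XY cZ; apply/eqP; rewrite eqEcard subUset XZ YZ /= cardsU XY cards0 subn0 //.
Qed.

Section Main.
Variables (A : finZmodType) (k : nat) (V : finType) (adj : rel V) (W : finType) (adjS : rel W).
Variables (l : V -> A) (f : V -> W) (a0 : A).
Hypothesis simV : simple_graph adj.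
Hypothesis simW : simple_graph adjS.
Hypothesis connW : forall x y : W, connect adjS x y.
Hypothesis finj : injective f.
Hypothesis fadj : forall x y, adj x y = adjS (f x) (f y).
Hypothesis lcord : cordial_labeling adj l.
Hypothesis V0 : 0 < #|V|.
Hypothesis EV : #|edges adj| = #|V| - 1.
Hypothesis EW : #|edges adjS| = #|W| - 1.
Hypothesis hV : forall a, fV l a = k.
Hypothesis hEa0 : fE adj l a0 + 1 = k.
Hypothesis hE : forall a, a != a0 -> fE adj l a = k.
Hypothesis Wbound : 2 * (#|W| - #|V|) <= #|A| + 2.

Definition U : {set W} := f @: [set: V].

Lemma cU : #|U| = #|V|.
Proof. by rewrite card_imset // cardsT. Qed.

Lemma VW : #|V| <= #|W|.
Proof. by rewrite -cU max_card. Qed.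

Definition Inv j (S : {set W}) (L : W -> A) (P : {set {set W}}) (e0 : {set W}) : Prop :=
  [/\ U \subset S, #|S| = #|U| + j, (forall v, L (f v) = l v),
      {in S :\: U &, injective L} &
      [/\ P \subset edges adjS, (forall e, e \in P -> e \subset S),
          (forall e, e \in P -> ~~ (e \subset U)), #|P| = j &
      [/\ 0 < j -> e0 \in P, 0 < j -> lab L e0 = a0 & {in P :\ e0 &, injective (lab L)}]]].

Lemma boundary (S : {set W}) u w : u \in S -> w \notin S ->
  exists x y, [/\ x \in S, y \notin S & adjS x y].
Proof.
move=> uS wS; case/connectP: (connW u w) => p.
elim: p u uS => [|z p IH] u uS /=.
  by move=> _ wu; move: wS; rewrite wu uS.
case/andP=> auz pz wl.
case zS: (z \in S).
  exact: IH zS pz wl.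
by exists u, z; rewrite zS.
Qed.

Definition L0 : W -> A := fun w => if [pick v | f v == w] is Some v then l v else 0%R.

Lemma L0f v : L0 (f v) = l v.
Proof.
rewrite /L0; case: pickP => [v' /eqP /finj -> // | /(_ v)]; by rewrite eqxx.
Qed.

Lemma Inv0 : Inv 0 U L0 set0 set0.
Proof.
split => //; first by rewrite addn0.
- exact: L0f.
- by move=> w1 w2; rewrite setDv inE.
split => //; first exact: sub0set.
- by move=> e; rewrite inE.
- by move=> e; rewrite inE.
- by rewrite cards0.
split => //.
by move=> e1 e2; rewrite inE in_set0 andbF.
Qed.

Lemma step j S L P e0 : j < #|W| - #|V| -> Inv j S L P e0 ->
  exists S' L' P' e0', Inv j.+1 S' L' P' e0'.
Proof.
move=> jm [US cS Lf Linj [PE PS PU cP [e0P e0l Pinj]]].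
have [u uU] : exists u, u \in U.
  by apply/card_gt0P; rewrite cU.
have [w wS] : exists w, w \notin S.
  case: (pickP (fun w => w \notin S)) => [w wS | allS]; first by exists w.
  have : #|[set: W]| <= #|S|.
    apply: subset_leq_card; apply/subsetP => x _.
    by move: (allS x) => /negbFE.
  rewrite cardsT cS cU => h; move: jm h; clear; lia.
have [x [y [xS yS axy]]] := boundary (subsetP US u uU) wS.
set N := S :\: U.
have cN : #|N| = j.
  by rewrite /N cardsD (setIidPr US) cS addKn.
have xy : x != y by apply/eqP => exy; move: yS; rewrite -exy xS.
have yU : y \notin U by apply/negP => /(subsetP US); rewrite (negbTE yS).
have [z [zN zP z0]] : exists z, [/\ z \notin L @: N,
    (L x + z)%R \notin lab L @: (P :\ e0) & (j = 0 -> (L x + z)%R = a0)].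
  case: j jm cS cP cN e0P e0l {Pinj} => [|j] jm cS cP cN e0P e0l.
    exists (a0 - L x)%R.
    rewrite (cards0_eq cN) (cards0_eq cP) set0D !imset0 !inE; split => //.
    by rewrite addrC subrK.
  set X := (L @: N) :|: [set (b - L x)%R | b in lab L @: (P :\ e0)].
  have cX : #|X| < #|A|.
    have h1 := leq_imset_card L N.
    have h2 := leq_imset_card (fun b => (b - L x)%R) (lab L @: (P :\ e0)).
    have h3 := leq_imset_card (lab L) (P :\ e0).
    have h4 := cardsD1 e0 P. rewrite e0P // add1n in h4.
    rewrite /X cardsU; apply: leq_ltn_trans (leq_subr _ _) _.
    apply: leq_ltn_trans (leq_add h1 (leq_trans h2 h3)) _.
    rewrite cN; move: h4; rewrite cP => -[<-]; have Hw := Wbound.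
    move: Hw jm; move: (#|W| - #|V|) (#|A|) => m n; clear; lia.
  case: (pickP (fun z => z \notin X)) => [z zX | allX].
    exists z; move: zX; rewrite /X inE negb_or => /andP[-> zX]; split => //.
    apply/negP => Hb; move/negP: zX; apply; apply/imsetP; exists (L x + z)%R => //.
    by rewrite addrC addKr.
  have : #|[set: A]| <= #|X|.
    apply: subset_leq_card; apply/subsetP => c _.
    by move: (allX c) => /negbFE.
  by rewrite cardsT leqNgt cX.
pose L' := fun w => if w == y then z else L w.
have L'S : forall w, w \in S -> L' w = L w.
  by move=> v vS; rewrite /L'; case: eqP => // vy; move: yS; rewrite -vy vS.
have labS : forall e : {set W}, e \subset S -> lab L' e = lab L e.
  by move=> e eS; apply: eq_bigr => v ve; apply: L'S; apply: (subsetP eS).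
have labxy : lab L' [set x; y] = (L x + z)%R.
  by rewrite lab_pair // L'S // /L' eqxx.
have xyP : [set x; y] \notin P.
  apply/negP => /PS /subsetP /(_ y); rewrite !inE eqxx orbT => /(_ isT).
  by rewrite (negbTE yS).
have xyE : [set x; y] \in edges adjS.
  by rewrite /edges inE; apply/existsP; exists x; apply/existsP; exists y; rewrite axy eqxx.
exists (y |: S), L', ([set x; y] |: P), (if j == 0 then [set x; y] else e0).
split.
- exact: subset_trans US (subsetU1 _ _).
- by rewrite cardsU1 yS cS addnS.
- by move=> v; rewrite L'S ?Lf // (subsetP US) //; apply: imset_f.
- move=> w1 w2; rewrite !inE => /andP[w1U /orP[/eqP-> | w1S]] /andP[w2U /orP[/eqP-> | w2S]] //.
  + rewrite [L' w2]L'S // /L' eqxx => zw2; case/negP: zN; rewrite zw2.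
    by apply: imset_f; rewrite inE w2U.
  + rewrite [L' w1]L'S // /L' eqxx => zw1; case/negP: zN; rewrite -zw1.
    by apply: imset_f; rewrite inE w1U.
  + rewrite !L'S //; apply: Linj; by rewrite inE ?w1U ?w2U.
split.
- apply/subsetP => e; rewrite in_setU1 => /orP[/eqP-> // | eP]; exact: (subsetP PE).
- move=> e; rewrite in_setU1 => /orP[/eqP-> | eP].
    by apply/subsetP => v; rewrite !inE => /orP[/eqP-> | /eqP->]; rewrite ?xS ?eqxx ?orbT.
  exact: subset_trans (PS e eP) (subsetU1 _ _).
- move=> e; rewrite in_setU1 => /orP[/eqP-> | eP]; last exact: PU.
  apply/negP => /subsetP /(_ y); rewrite !inE eqxx orbT => /(_ isT).
  by rewrite (negbTE yU).
- by rewrite cardsU1 xyP cP.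
case: eqP => [j0 | jn0].
  have P0 : P = set0 by apply: cards0_eq; rewrite cP j0.
  split.
  - by rewrite setU11.
  - by rewrite labxy z0.
  - by move=> e1 e2; rewrite P0 !inE => /andP[/negbTE -> ]; rewrite orbF.
have jpos : 0 < j by case: j jn0 {jm cS cP cN e0P e0l z0} => [|j] //.
have e0P' := e0P jpos.
have e0S := PS e0 e0P'.
split.
- by rewrite setU1r.
- by rewrite labS // e0l.
- move=> e1 e2; rewrite !inE => /andP[e1n /orP[/eqP-> | e1P]] /andP[e2n /orP[/eqP-> | e2P]] //.
  + rewrite labxy labS ?PS // => h; case/negP: zP; rewrite h.
    by apply: imset_f; rewrite !inE e2n.
  + rewrite labxy labS ?PS // => h; case/negP: zP; rewrite -h.
    by apply: imset_f; rewrite !inE e1n.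
  + rewrite !labS ?PS //; apply: Pinj; by rewrite !inE ?e1n ?e2n.
Qed.

Lemma reach j : j <= #|W| - #|V| -> exists S L P e0, Inv j S L P e0.
Proof.
elim: j => [|j IH] jm; first by exists U, L0, set0, set0; exact: Inv0.
have [S [L [P [e0 H]]]] := IH (ltnW jm).
exact: step jm H.
Qed.

Lemma edge_img e : e \in edges adj -> f @: e \in edges adjS.
Proof.
rewrite /edges !inE => /existsP[x /existsP[y /andP[axy /eqP ->]]].
apply/existsP; exists (f x); apply/existsP; exists (f y).
by rewrite imsetU1 imset_set1 -fadj axy eqxx.
Qed.

Lemma final S L P e0 : Inv (#|W| - #|V|) S L P e0 -> cordial_labeling adjS L.
Proof.
move=> [US cS Lf Linj [PE PS PU cP [e0P e0l Pinj]]].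
have ST : S = setT.
  apply/eqP; rewrite eqEcard subsetT cardsT cS cU.
  have := VW; move: (#|W|) (#|V|) => a b; clear; lia.
have fVL : forall a, k <= fV L a <= k.+1.
  move=> a.
  have H := cardsID U [set w | L w == a].
  have H1 : [set w | L w == a] :&: U = f @: [set v | l v == a].
    apply/setP => w; rewrite !inE; apply/andP/imsetP.
    - case=> /eqP Lw /imsetP[v _ wv]; exists v; by rewrite // inE -Lf -wv Lw.
    - case=> v; rewrite inE => /eqP lv ->; split; first by rewrite Lf lv.
      by apply: imset_f; rewrite inE.
  have H2 : #|[set w | L w == a] :\: U| <= 1.
    have -> : [set w | L w == a] :\: U = [set w in S :\: U | L w == a].
      by apply/setP => w; rewrite !inE ST !inE andbT.
    exact: card_fib_le1.
  have H3 := hV a; rewrite /fV in H3 *.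
  rewrite -H H1 card_imset // H3.
  move: H2; move: (#|[set w | L w == a] :\: U|) => c; clear; lia.
have labf : forall e : {set V}, lab L (f @: e) = lab l e.
  move=> e; rewrite /lab big_imset /=; last by move=> ? ? _ _; apply: finj.
  by apply: eq_bigr => v _; rewrite Lf.
pose EU := (fun e : {set V} => f @: e) @: edges adj.
have EUE : EU \subset edges adjS.
  by apply/subsetP => e /imsetP[e' e'E ->]; apply: edge_img.
have EUP : EU :&: P = set0.
  apply/setP => e; rewrite in_setI in_set0; apply/negP => /andP[/imsetP[e' _ ->] eP].
  move/negP: (PU _ eP); apply; apply/subsetP => w /imsetP[v _ ->].
  by apply: imset_f; rewrite inE.
have cEU : #|EU| = #|V| - 1 by rewrite card_imset ?EV //; exact: imset_inj.
have Eeq : EU :|: P = edges adjS.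
  apply: union_eq => //; rewrite cEU cP EW.
  have := VW; have := V0; move: (#|W|) (#|V|) => a b; clear; lia.
have fEL : forall a, fE adjS L a = fE adj l a + #|[set e in P | lab L e == a]|.
  move=> a; rewrite !fE_lab // -Eeq count_split //.
  by rewrite (img_count _ _ (imset_inj finj) labf).
case: (posnP (#|W| - #|V|)) => [m0 | mpos].
  have P0 : P = set0 by apply: cards0_eq; rewrite cP m0.
  have c0 : forall a, #|[set e in P | lab L e == a]| = 0.
    by move=> a; apply/eqP; rewrite cards_eq0; apply/eqP/setP => e; rewrite P0 !inE.
  move=> a1 a2; have := lcord a1 a2; rewrite !fEL !c0 !addn0.
  have := fVL a1; have := fVL a2.
  move: (fV L a1) (fV L a2) (fV l a1) (fV l a2) (fE adj l a1) (fE adj l a2) => x1 x2 x3 x4 x5 x6.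
  clear; lia.
have cb : forall a, ((a == a0) <= #|[set e in P | lab L e == a]|) &&
                    (#|[set e in P | lab L e == a]| <= (a == a0) + 1).
  move=> a; rewrite (cardsD1 e0) !inE (e0P mpos) (e0l mpos) /= eq_sym.
  have : #|[set e in P | lab L e == a] :\ e0| <= 1.
    have -> : [set e in P | lab L e == a] :\ e0 = [set e in P :\ e0 | lab L e == a].
      by apply/setP => e; rewrite !inE andbA.
    exact: card_fib_le1.
  move: (#|[set e in P | lab L e == a] :\ e0|) => c.
  by case: (a == a0) => /=; clear; lia.
have B : forall a, k <= fE adjS L a <= k.+1.
  move=> a; rewrite fEL; have := cb a.
  case: (eqVneq a a0) => [-> | ne].
    rewrite /=; have := hEa0.
    move: (fE adj l a0) (#|[set e in P | lab L e == a0]|) => x c; clear; lia.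
  rewrite hE // /=.
  move: (#|[set e in P | lab L e == a]|) => c; clear; lia.
move=> a1 a2.
have := B a1; have := B a2; have := fVL a1; have := fVL a2.
move: (fV L a1) (fV L a2) (fE adjS L a1) (fE adjS L a2) => x1 x2 x3 x4.
clear; lia.
Qed.

Lemma main_sec : A_cordial adjS A.
Proof.
have [S [L [P [e0 H]]]] := reach (leqnn _).
by exists L; exact: final H.
Qed.

End Main.

Theorem lemma4p1 (A : finZmodType) (k : nat)
  (V : finType) (adj : rel V) (W : finType) (adjS : rel W) :
  is_tree adj -> #|V| = (#|A| * k)%N -> A_cordial adj A ->
  is_tree adjS -> induced_subgraph adj adjS ->
  (#|W| <= #|A| * k + #|A| %/ 2 + 1)%N ->
  A_cordial adjS A.
Proof.
move=> [simV [V0 [connV EV]]] cardV [l lcord] [simW [W0 [connW EW]]] [f [finj fadj]] Wb.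
have hsumV : \sum_a fV l a = #|A| * k.
  rewrite -cardV; transitivity #|[set: V]|; last by rewrite cardsT.
  rewrite -(sum_fib [set: V] l); apply: eq_bigr => a _.
  by apply: eq_card => v; rewrite !inE.
have hV : forall a, fV l a = k.
  move=> a; case: (ltngtP (fV l a) k) => // H; exfalso.
  - have le : forall b, fV l b <= k.
      move=> b; have [_ [h _]] := lcord a b.
      move: h H; move: (fV l a) (fV l b) => x y; clear; lia.
    have := sum_le_eq le hsumV a; move: H; move: (fV l a) => x; clear; lia.
  - have ge : forall b, k <= fV l b.
      move=> b; have [h _] := lcord a b.
      move: h H; move: (fV l a) (fV l b) => x y; clear; lia.
    have := sum_ge_eq ge hsumV a; move: H; move: (fV l a) => x; clear; lia.
have npos : 0 < #|A| * k by rewrite -cardV.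
have hsumE : \sum_a fE adj l a = #|A| * k - 1.
  transitivity (\sum_a #|[set e in edges adj | lab l e == a]|).
    by apply: eq_bigr => a _; rewrite fE_lab.
  by rewrite sum_fib EV cardV.
have hEle : forall b, fE adj l b <= k.
  move=> b; case: (leqP (fE adj l b) k) => // Hb; exfalso.
  have ge : forall c, k <= fE adj l c.
    move=> c; have [_ [_ [h _]]] := lcord b c.
    move: h Hb; move: (fE adj l b) (fE adj l c) => x y; clear; lia.
  have : \sum_(c : A) k <= \sum_c fE adj l c by apply: leq_sum => c _.
  rewrite sum_nat_const hsumE.
  move: npos; move: (#|A| * k) => x; clear; lia.
case: (pickP (fun a => fE adj l a < k)) => [a0 Ha0 | none]; last first.
  have ge : forall c, k <= fE adj l c by move=> c; rewrite leqNgt none.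
  have : \sum_(c : A) k <= \sum_c fE adj l c by apply: leq_sum => c _.
  rewrite sum_nat_const hsumE.
  move: npos; move: (#|A| * k) => x; clear; lia.
have gle : forall b, fE adj l b + (b == a0) <= k.
  move=> b; case: eqP => [-> | _]; first by rewrite addn1.
  by rewrite addn0.
have gsum : \sum_b (fE adj l b + (b == a0)) = #|A| * k.
  rewrite big_split /= hsumE (bigD1 a0) //= eqxx big1 => [|b /negbTE -> //].
  move: npos; move: (#|A| * k) => x; clear; lia.
have Hg := sum_le_eq gle gsum.
have hEa0 : fE adj l a0 + 1 = k by have := Hg a0; rewrite eqxx.
have hE : forall a, a != a0 -> fE adj l a = k.
  by move=> a /negbTE ana; have := Hg a; rewrite ana addn0.
have Wbound : 2 * (#|W| - #|V|) <= #|A| + 2.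
  move: Wb; rewrite -cardV; move: (#|W|) (#|V|) (#|A|) => w v n; clear; lia.
have connW' : forall x y : W, connect adjS x y by [].
exact: (main_sec simV simW connW' finj fadj lcord V0 EV EW hV hEa0 hE Wbound).
Qed.
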